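(* Let $R$ be a uniform $L$-layered $1$-semifield$^\dagger$ with $L=\mathbb{Q}_{>0}$. The layered derivative of a separable polynomial in $R[\lambda]$ is separable.
   Context: Concretely, $R=R(\mathbb{Q}_{>0},\mathcal{G})$ with $\mathcal{G}$ a totally ordered abelian group; elements $x^{[\ell]}$ ($x\in\mathcal{G}$, layer $\ell\in\mathbb{Q}_{>0}$), $x^{[k]}y^{[\ell]}=(xy)^{[k\ell]}$, $x^{[k]}+y^{[\ell]}$ equal to $x^{[k]}$ if $x>y$, $y^{[\ell]}$ if $x<y$, $x^{[k+\ell]}$ if $x=y$; a zero element $\mathbb{0}_R$ is formally adjoined. Two elements are $\nu$-equivalent if they have the same $\mathcal{G}$-value. An element $b$ is a corner root of $f=\sum h_i$ (sum of monomials) if $f(b)\neq h_i(b)$ for each monomial $h_i$. A polynomial is separable if it is a constant times a product of linear factors having pairwise $\nu$-inequivalent corner roots. The layered derivative of $\sum_{j=0}^n\alpha_j^{[\ell_j]}\lambda^j$ is $\sum_{j=1}^n\alpha_j^{[j\ell_j]}\lambda^{j-1}$. *)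

(* Defs.v *)
From HB Require Import structures.
From mathcomp Require Import all_boot all_order all_algebra.
Set Implicit Arguments. Unset Strict Implicit. Unset Printing Implicit Defensive.
Import Order.TTheory GRing.Theory Num.Theory.
Local Open Scope ring_scope.

(* The group operation of the paper (written multiplicatively) is [+] here. *)
Definition is_total_order_group (G : zmodType) (le : rel G) : Prop :=
  [/\ (forall x y, le x y -> le y x -> x = y),
      (forall x y z, le x y -> le y z -> le x z),
      (forall x y, le x y || le y x) &
      (forall x y z, le x y -> le (x + z) (y + z))].

Definition posq := {q : rat | 0 < q}.

Lemma posq_add_proof (k l : posq) : 0 < val k + val l.
Proof. by apply: addr_gt0; [exact: valP k | exact: valP l]. Qed.
Lemma posq_mul_proof (k l : posq) : 0 < val k * val l.
Proof. by apply: mulr_gt0; [exact: valP k | exact: valP l]. Qed.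
Lemma posq_scale_proof (n : nat) (k : posq) : 0 < (n.+1)%:R * val k.
Proof. by apply: mulr_gt0; [exact: ltr0Sn | exact: valP k]. Qed.
Lemma posq_one_proof : 0 < (1 : rat). Proof. exact: ltr01. Qed.

Definition posq_add (k l : posq) : posq := exist (fun q : rat => 0 < q) _ (posq_add_proof k l).
Definition posq_mul (k l : posq) : posq := exist (fun q : rat => 0 < q) _ (posq_mul_proof k l).
Definition posq_scale (n : nat) (k : posq) : posq :=
  exist (fun q : rat => 0 < q) _ (posq_scale_proof n k).
Definition posq1 : posq := exist (fun q : rat => 0 < q) _ posq_one_proof.

Section Layered.
Variables (G : zmodType) (le : rel G).

(* The uniform layered 1-semifield R(Q_{>0}, G) with a formally adjoined zero:
   [None] is 0_R, [Some (x, l)] is x^[l]. *)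
Definition LR := option (G * posq).

Definition lzero : LR := None.
Definition lone : LR := Some (0, posq1).

Definition ladd (a b : LR) : LR :=
  match a, b with
  | None, _ => b
  | _, None => a
  | Some (x, k), Some (y, l) =>
      if x == y then Some (x, posq_add k l)
      else if le x y then b else a
  end.

Definition lmul (a b : LR) : LR :=
  match a, b with
  | Some (x, k), Some (y, l) => Some (x + y, posq_mul k l)
  | _, _ => None
  end.

Fixpoint lpow (a : LR) (n : nat) : LR :=
  match n with 0 => lone | n.+1 => lmul a (lpow a n) end.

Definition nu_equiv (a b : LR) : bool :=
  match a, b with
  | Some (x, _), Some (y, _) => x == y
  | None, None => true
  | _, _ => false
  end.

Definition lsum (s : seq LR) : LR := foldr ladd lzero s.

(* Polynomials in R[lambda]: coefficient lists, coefficient of lambda^i at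
   position i; equality of polynomials ignores trailing zeros. *)
Definition lpoly := seq LR.
Definition coef (p : lpoly) (i : nat) : LR := nth lzero p i.
Definition poly_eq (p q : lpoly) : Prop := forall i, coef p i = coef q i.

Definition peval (p : lpoly) (b : LR) : LR :=
  lsum [seq lmul (coef p i) (lpow b i) | i <- iota 0 (size p)].

Definition corner_root (p : lpoly) (b : LR) : Prop :=
  forall i, (i < size p)%N -> coef p i != lzero ->
    peval p b != lmul (coef p i) (lpow b i).

Definition pmul (p q : lpoly) : lpoly :=
  mkseq (fun k => lsum [seq lmul (coef p i) (coef q (k - i)) | i <- iota 0 k.+1])
        (size p + size q).-1.

(* the linear polynomial alpha*lambda + beta, given as (alpha, beta) *)
Definition linpoly (ab : LR * LR) : lpoly := [:: ab.2; ab.1].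

Definition prod_lin (ls : seq (LR * LR)) : lpoly :=
  foldr (fun ab acc => pmul (linpoly ab) acc) [:: lone] ls.

Definition separable (f : lpoly) : Prop :=
  exists (c : LR) (ls : seq (LR * LR)),
    [/\ (forall ab, ab \in ls -> ab.1 != lzero /\ ab.2 != lzero),
        (forall i j, (i < j)%N -> (j < size ls)%N ->
           forall b b', corner_root (linpoly (nth (lone, lone) ls i)) b ->
                        corner_root (linpoly (nth (lone, lone) ls j)) b' ->
                        ~~ nu_equiv b b') &
        poly_eq f (pmul [:: c] (prod_lin ls))].

Definition lscale (n : nat) (a : LR) : LR :=
  match a with
  | Some (x, l) => Some (x, posq_scale n l)
  | None => None
  end.

Definition lderiv (f : lpoly) : lpoly :=
  [seq lscale i (coef f i.+1) | i <- iota 0 (size f).-1].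

End Layered.

(* Main.v *)
Require Import Defs.
From HB Require Import structures.
From mathcomp Require Import all_boot all_order all_algebra.
From mathcomp Require Import lra.
Set Implicit Arguments. Unset Strict Implicit. Unset Printing Implicit Defensive.
Import Order.TTheory GRing.Theory Num.Theory.
Local Open Scope ring_scope.

Section Proof.
Variables (G : zmodType) (le : rel G).
Hypothesis HG : is_total_order_group le.

Let antisym : forall x y, le x y -> le y x -> x = y. Proof. by case: HG. Qed.
Let trans : forall x y z, le x y -> le y z -> le x z. Proof. by case: HG. Qed.
Let total : forall x y, le x y || le y x. Proof. by case: HG. Qed.
Let compat : forall x y z, le x y -> le (x + z) (y + z). Proof. by case: HG. Qed.

Lemma lerefl x : le x x. Proof. by have := total x x; rewrite orbb. Qed.

Lemma le_add2r z x y : le (x + z) (y + z) = le x y.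
Proof.
apply/idP/idP => [h|]; last exact: compat.
by have := compat (- z) h; rewrite !addrK.
Qed.

Lemma le_add2l z x y : le (z + x) (z + y) = le x y.
Proof. by rewrite ![z + _]addrC le_add2r. Qed.

Definition lt x y := le x y && (x != y).

Lemma ltNge x y : lt x y = ~~ le y x.
Proof.
rewrite /lt; case h1: (le x y); case h2: (le y x) => //=.
- by apply/negbF/eqP; apply: antisym.
- by apply/eqP => e; move: h2; rewrite e lerefl.
- by have := total x y; rewrite h1 h2.
Qed.

Lemma lt_add2r z x y : lt (x + z) (y + z) = lt x y.
Proof. by rewrite !ltNge le_add2r. Qed.

Lemma lt_add2l z x y : lt (z + x) (z + y) = lt x y.
Proof. by rewrite !ltNge le_add2l. Qed.

Lemma nle_le x y : ~~ le y x -> le x y.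
Proof. by move=> h; have := total x y; rewrite (negbTE h) orbF. Qed.

Lemma lt_le x y : lt x y -> le x y. Proof. by case/andP. Qed.
Lemma lt_neq x y : lt x y -> x != y. Proof. by case/andP. Qed.

Lemma lt_le_trans x y z : lt x y -> le y z -> lt x z.
Proof.
rewrite !ltNge => h1 h2; apply/negP => h3.
by move: h1; rewrite (trans h2 h3).
Qed.

Lemma le_lt_trans x y z : le x y -> lt y z -> lt x z.
Proof.
rewrite !ltNge => h1 h2; apply/negP => h3.
by move: h2; rewrite (trans h3 h1).
Qed.

Lemma lt_trans x y z : lt x y -> lt y z -> lt x z.
Proof. by move=> h1 h2; apply: lt_le_trans h1 (lt_le h2). Qed.



Lemma lt_total x y : x != y -> ~~ lt x y -> lt y x.
Proof. by move=> ne; rewrite ltNge negbK => h; rewrite /lt h eq_sym ne. Qed.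

Lemma ltE2 a y z : lt (a + y) z = lt a (z - y).
Proof. by rewrite -(lt_add2r (- y)) addrK. Qed.

Lemma ltE1 a y b z : lt (a + y) (b + z) = lt (y - z) (b - a).
Proof.
rewrite -(lt_add2r (a + z) (y - z)) addrCA subrK.
by rewrite addrA subrK.
Qed.

Lemma eqE1 (a y b z : G) : (a + y == b + z) = (y - z == b - a).
Proof.
rewrite -(inj_eq (@addIr G (a + z)) (y - z)) addrCA subrK.
by rewrite addrA subrK.
Qed.

Notation LRG := (LR G).

Definition gv (a : LRG) : G := if a is Some (x, _) then x else 0.

Lemma lmulr0 (x : LRG) : lmul x None = None. Proof. by case: x => [[]|]. Qed.
Lemma laddr0 (x : LRG) : ladd le x None = x. Proof. by case: x => [[]|]. Qed.

Lemma lmul1r (x : LRG) : lmul (Some (0, posq1)) x = x.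
Proof.
case: x => [[x l]|] //=; rewrite add0r; congr (Some (_, _)).
by apply: val_inj; rewrite /= mul1r.
Qed.

Lemma lmulr1 (x : LRG) : lmul x (lone G) = x.
Proof.
case: x => [[x l]|] //=; rewrite addr0; congr (Some (_, _)).
by apply: val_inj; rewrite /= mulr1.
Qed.

Lemma lmulC (x y : LRG) : lmul x y = lmul y x.
Proof.
case: x => [[x k]|]; case: y => [[y l]|] //=; rewrite addrC; congr (Some (_, _)).
by apply: val_inj; rewrite /= mulrC.
Qed.

Lemma lmulA (x y z : LRG) : lmul x (lmul y z) = lmul (lmul x y) z.
Proof.
case: x => [[x k]|]; case: y => [[y l]|]; case: z => [[z m]|] //=.
rewrite addrA; congr (Some (_, _)).
by apply: val_inj; rewrite /= mulrA.
Qed.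

Lemma lmulCA (x y z : LRG) : lmul x (lmul y z) = lmul y (lmul x z).
Proof. by rewrite lmulA (lmulC x) -lmulA. Qed.

Lemma lmul_addr (c x y : LRG) : lmul c (ladd le x y) = ladd le (lmul c x) (lmul c y).
Proof.
case: c => [[z m]|] //; case: x => [[x k]|]; case: y => [[y l]|] //=.
rewrite (inj_eq (@addrI G z)) le_add2l.
case: (x =P y) => [e|_]; last by case: (le x y).
subst y.
congr (Some (_, _)); apply: val_inj; rewrite /= mulrDr //.
Qed.

Lemma corner_lin_gv (xa xb : G) (la lb : posq) (x : LRG) :
  corner_root le (linpoly (Some (xa, la), Some (xb, lb))) x ->
  x != None /\ gv x = xb - xa.
Proof.
rewrite /corner_root /peval /=.
case: x => [[y l]|] h.
  split => //=.
  move: h; rewrite ?laddr0 /=.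
  case: eqP => [e|ne] h.
    by rewrite !addr0 in e; rewrite e addrAC subrr add0r.
  case: (le (xb + 0) (xa + (y + 0))) h => h.
    by have := h 1%N isT isT; rewrite eqxx.
  by have := h 0%N isT isT; rewrite eqxx.
by have := h 0%N isT isT; rewrite /= ?laddr0 ?lmulr1 eqxx.
Qed.

Lemma corner_lin_ex (xa xb : G) (la lb : posq) :
  corner_root le (linpoly (Some (xa, la), Some (xb, lb))) (Some (xb - xa, posq1)).
Proof.
rewrite /corner_root /peval /= => i.
rewrite ?laddr0 /= !addr0 [xa + _]addrC subrK eqxx.
have := valP la; have := valP lb; rewrite /= => ha hb.
case: i => [|[|i]] // _ _; apply/negP => /eqP e;
  have := congr1 (fun p : LRG => if p is Some (_, l) then val l else 0) e;
  rewrite /=; lra.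
Qed.

Lemma lsum_none (f : nat -> LRG) a k :
  (forall i, (a <= i)%N -> f i = None) -> lsum le [seq f i | i <- iota a k] = None.
Proof.
elim: k a => [|k IH] a h //=.
by rewrite IH ?h ?leqnn // => i hi; apply: h; apply: ltnW.
Qed.

Lemma coef_big (p : seq LRG) k : (size p <= k)%N -> coef p k = None.
Proof. by move=> h; rewrite /coef nth_default. Qed.

Lemma coef_pmulC (c : LRG) q k : coef (pmul le [:: c] q) k = lmul c (coef q k).
Proof.
rewrite {1}/coef /pmul /=.
case: (ltnP k (size q)) => hk; last first.
  by rewrite nth_default ?size_mkseq // coef_big // lmulr0.
rewrite nth_mkseq //= lsum_none ?laddr0 ?subn0 // => -[|i] _ //.
by rewrite /coef /= nth_nil.
Qed.

Lemma coef_pmul2 (b a : LRG) q k : coef (pmul le [:: b; a] q) k =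
  ladd le (lmul b (coef q k)) (if k is k'.+1 then lmul a (coef q k') else None).
Proof.
rewrite {1}/coef /pmul /=.
case: (ltnP k (size q).+1) => hk; last first.
  rewrite nth_default ?size_mkseq; last by rewrite add1n.
  rewrite coef_big; last exact: ltnW.
  case: k hk => [|k] hk; first by rewrite ltn0 in hk.
  by rewrite (@coef_big q k) ?lmulr0.
rewrite nth_mkseq //; case: k hk => [|k] hk /=; first by rewrite ?laddr0 ?subn0.
rewrite lsum_none ?laddr0 ?subn0 ?subSS ?subn0 // => -[|[|i]] _ //.
by rewrite /coef /= nth_nil.
Qed.

Definition D (p : nat -> LRG) k := gv (p k.-1) - gv (p k).
Definition root (ab : LRG * LRG) := gv ab.2 - gv ab.1.

Lemma subDl (c y z : G) : (c + y) - (c + z) = y - z.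
Proof. by rewrite opprD addrACA subrr add0r. Qed.
Lemma subDr (a b y : G) : (a + y) - (b + y) = a - b.
Proof. by rewrite opprD addrACA subrr addr0. Qed.

Lemma prod_props (ls : seq (LRG * LRG)) :
  (forall ab, ab \in ls -> ab.1 != None /\ ab.2 != None) ->
  uniq [seq root ab | ab <- ls] ->
  [/\ forall k, (k <= size ls)%N -> coef (prod_lin le ls) k != None,
      forall k, (size ls < k)%N -> coef (prod_lin le ls) k = None,
      forall k, (0 < k < size ls)%N -> lt (D (coef (prod_lin le ls)) k) (D (coef (prod_lin le ls)) k.+1) &
      forall k, (0 < k <= size ls)%N -> D (coef (prod_lin le ls)) k \in [seq root ab | ab <- ls]].
Proof.
elim: ls => [|[a b] ls IH] hnz hu.
  by split => -[|k] //=; rewrite /coef /= nth_nil.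
have [ha hb] := hnz (a, b) (mem_head _ _).
rewrite /= in ha hb.
move: hu => /= /andP [hr hu].
have [nz zr cv rt] := IH (fun ab h => hnz ab ltac:(by rewrite inE h orbT)) hu.
set p := coef (prod_lin le ls) in nz zr cv rt.
set n := size ls in nz zr cv rt.
case: a ha hnz hr => [[xa la]|] // _ hnz hr.
case: b hb hnz hr => [[xb lb]|] // _ hnz hr.
set r := xb - xa.
have hrr : root (Some (xa, la), Some (xb, lb)) = r by [].
rewrite hrr in hr.
set q := coef (prod_lin le ((Some (xa, la), Some (xb, lb)) :: ls)).
have qE : forall k, q k =
   ladd le (lmul (Some (xb, lb)) (p k)) (if k is k'.+1 then lmul (Some (xa, la)) (p k') else None).
  by move=> k; rewrite /q /= coef_pmul2.
pose C k := (k == 0%N) || ((k <= n)%N && lt (D p k) r).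
have Dne : forall k, (0 < k <= n)%N -> D p k != r.
  move=> k hk; apply/eqP => e; move: hr; rewrite -e.
  by rewrite (rt k hk).
have val : forall k, (k <= n.+1)%N -> q k != None /\
   gv (q k) = (if C k then xb + gv (p k) else xa + gv (p k.-1)).
  move=> [|k] hk.
    rewrite qE laddr0; have := nz 0%N isT.
    by case: (p 0%N) => [[v l]|].
  rewrite qE.
  case: (ltnP k n) => hkn.
    have := nz k.+1 hkn; have := nz k (ltnW hkn).
    have := Dne k.+1 hkn; rewrite /C /D /= hkn /=.
    case: (p k.+1) => [[v l]|] //; case: (p k) => [[u l']|] //= hD _ _.
    rewrite [_ == xa + u]eq_sym (eqE1 xa) (negbTE hD) -ltE1 ltNge.
    by case: (le (xb + v) (xa + u)).
  have ek : k = n by apply/eqP; rewrite eqn_leq hkn andbT -ltnS.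
  subst k; rewrite zr // /C /= ltnn /=.
  by have := nz n (leqnn n); case: (p n) => [[u l]|].
have zq : forall k, (n.+1 < k)%N -> q k = None.
  move=> [|k] hk //; rewrite qE !zr ?lmulr0 //; exact: ltnW.
have Cmono : forall k, C k.+1 -> C k.
  move=> [|k] //; rewrite /C /= => /andP [hk hlt].
  by rewrite (ltnW hk) /=; apply: lt_trans hlt; apply: cv; rewrite hk.
have C0 : C 0%N by [].
have Dq : forall j, (j <= n)%N -> D q j.+1 =
   if C j.+1 then D p j.+1 else if C j then r else D p j.
  move=> j hj; rewrite /D /= (val j.+1 hj).2 (val j (leq_trans hj (leqnSn n))).2.
  case h1: (C j.+1); first by rewrite (Cmono _ h1) subDl.
  case h2: (C j); first by rewrite subDr.
  by case: j hj h1 h2 => [|j] //= hj h1 h2; rewrite subDl.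
split.
- by move=> k hk; exact: (val k hk).1.
- exact: zq.
- move=> [|k] // /andP [_]; rewrite ltnS => hk; rewrite (Dq k (ltnW hk)) (Dq k.+1 hk).
  case h2: (C k.+2).
    rewrite (Cmono _ h2); move: h2; rewrite /C /= => /andP [h2 _].
    by apply: cv; rewrite h2.
  case h1: (C k.+1).
    by move: h1; rewrite /C /= => /andP [_ h1].
  case h0: (C k).
    apply: lt_total; first by apply: Dne.
    by move: h1; rewrite /C /= hk /= => ->.
  case: k hk h0 h1 h2 => [|k] //= hk _ _ _.
  by apply: cv.
- move=> [|j] // /andP [_ hj]; rewrite (Dq j hj) /= inE hrr.
  case h1: (C j.+1).
    move: h1; rewrite /C /= => /andP [h1 _].
    by rewrite rt ?orbT.
  case h0: (C j); first by rewrite eqxx.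
  case: j hj h0 h1 => [|j] //= hj _ _.
  by rewrite rt ?orbT // ltnW.
Qed.

Lemma chain (w : nat -> LRG) m :
  (forall k, (0 < k < m)%N -> lt (D w k) (D w k.+1)) ->
  forall j, (1 < j <= m)%N -> lt (D w 1) (D w j).
Proof.
move=> cv; elim=> [|j IH] // /andP [hj hjm].
case: j IH hj hjm => [|[|j]] // IH _ hjm.
  by apply: cv.
apply: lt_trans (IH _) (cv _ _); first by rewrite /= ltnW.
by rewrite /=.
Qed.

Lemma Dshift (w : nat -> LRG) k : (0 < k)%N -> D (fun i => w i.+1) k = D w k.+1.
Proof. by case: k. Qed.

Definition posq_div (k l : posq) : posq :=
  exist (fun q : rat => 0 < q) (val k / val l) (divr_gt0 (valP k) (valP l)).

Lemma construct m (w : nat -> LRG) :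
  (forall k, (k <= m)%N -> w k != None) ->
  (forall k, (m < k)%N -> w k = None) ->
  (forall k, (0 < k < m)%N -> lt (D w k) (D w k.+1)) ->
  exists c ls, [/\ forall ab, ab \in ls -> ab.1 != None /\ ab.2 != None,
        uniq [seq root ab | ab <- ls],
        size ls = m,
        (0 < m)%N -> forall ab, ab \in ls -> le (D w 1) (root ab) &
        forall k, w k = coef (pmul le [:: c] (prod_lin le ls)) k].
Proof.
elim: m w => [|m IH] w nz zr cv.
  exists (w 0%N), [::]; split => // k.
  rewrite coef_pmulC; case: k => [|k] /=; first by rewrite lmulr1.
  by rewrite /coef /= nth_nil lmulr0 zr.
have cv' : forall k, (0 < k < m)%N -> lt (D (fun i => w i.+1) k) (D (fun i => w i.+1) k.+1).
  move=> k /andP [k0 hk]; rewrite !Dshift //; apply: cv.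
  by rewrite /= ltnS.
have [c [ls [hnz hu hsz hle heq]]] := IH (fun i => w i.+1)
   (fun k hk => nz k.+1 hk) (fun k hk => zr k.+1 hk) cv'.
have h0 := nz 0%N isT; have h1 := nz 1%N isT.
case e0: (w 0%N) h0 => [[v0 L0]|] // _; case e1: (w 1%N) h1 => [[v1 L1]|] // _.
set r := v0 - v1.
have Dw1 : D w 1 = r by rewrite /D /= e0 e1.
pose b : LRG := Some (r, posq_div L0 L1).
pose a : LRG := Some (0, posq1).
exists c, ((a, b) :: ls); split.
- move=> ab; rewrite inE => /orP [/eqP -> //|]; exact: hnz.
- rewrite /= hu andbT; apply/mapP => -[ab hab].
  have hrt : root (a, b) = r by rewrite /root /= subr0.
  rewrite hrt => er.
  case: m hsz IH hle cv cv' nz zr heq => [|m] hsz IH hle cv cv' nz zr heq.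
    by move: hab; case: ls hsz {hnz hu heq hle} => [|? ?].
  have := hle isT ab hab; rewrite Dshift // => hl.
  have : lt (D w 1) (D w 2) by apply: cv.
  rewrite Dw1 => hlt; have := lt_le_trans hlt hl.
  by rewrite er /lt eqxx andbF.
- by rewrite /= hsz.
- move=> _ ab; rewrite inE => /orP [/eqP -> |hab].
    by rewrite Dw1 /root /= subr0 lerefl.
  case: m hsz IH hle cv cv' nz zr heq => [|m] hsz IH hle cv cv' nz zr heq.
    by move: hab; case: ls hsz {hnz hu heq hle} => [|? ?].
  have := hle isT ab hab; rewrite Dshift // => hl.
  have : lt (D w 1) (D w 2) by apply: cv.
  by move=> hlt; apply: lt_le; apply: lt_le_trans hlt hl.
- move=> k; rewrite coef_pmulC /= coef_pmul2 lmul_addr.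
  have hP : forall j, lmul c (coef (prod_lin le ls) j) = w j.+1.
    by move=> j; rewrite heq coef_pmulC.
  case: k => [|k].
    rewrite lmulr0 laddr0 lmulCA hP e1 e0 /b /=.
    congr (Some (_, _)); first by rewrite subrK.
    apply: val_inj => /=; rewrite divfK //.
    by have := valP L1; rewrite /= => h; rewrite gt_eqF.
  rewrite lmulCA hP lmulCA hP lmul1r.
  case: (ltnP k m) => hk; last by rewrite (zr k.+2) // ltnS ltnS.
  have := nz k.+1 (ltnW hk); have := nz k.+2 hk.
  have hc : lt (D w 1) (D w k.+2) by apply: (chain cv); rewrite /= ltnS.
  move: hc; rewrite Dw1 /D /=.
  case: (w k.+2) => [[v2 l2]|] //; case: (w k.+1) => [[u l]|] //= hc _ _.
  rewrite -ltE2 in hc.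
  by case/andP: hc => -> /negbTE ->.
Qed.


Lemma nth_root (ls : seq (LRG * LRG)) i :
  (i < size ls)%N -> nth 0 [seq root ab | ab <- ls] i = root (nth (lone G, lone G) ls i).
Proof. by move=> h; rewrite (nth_map (lone G, lone G)). Qed.

Lemma uniq_corner (ls : seq (LRG * LRG)) :
  (forall ab, ab \in ls -> ab.1 != None /\ ab.2 != None) ->
  uniq [seq root ab | ab <- ls] ->
  forall i j, (i < j)%N -> (j < size ls)%N ->
  forall b b', corner_root le (linpoly (nth (lone G, lone G) ls i)) b ->
               corner_root le (linpoly (nth (lone G, lone G) ls j)) b' ->
               ~~ nu_equiv b b'.
Proof.
move=> hnz hu i j hij hj b b' hb hb'.
have hi : (i < size ls)%N by apply: ltn_trans hj.
have := nth_uniq 0 (s := [seq root ab | ab <- ls]) (i := i) (j := j).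
rewrite size_map hi hj hu (ltn_eqF hij) !nth_root // => /(_ isT isT isT) hne.
have [n1 n2] := hnz _ (mem_nth (lone G, lone G) hi).
have [n1' n2'] := hnz _ (mem_nth (lone G, lone G) hj).
move: hb hb' hne n1 n2 n1' n2'.
case: (nth _ ls i) => [[[xa la]|] [[xb lb]|]] //=;
case: (nth _ ls j) => [[[xa' la']|] [[xb' lb']|]] //= hb hb' hne _ _ _ _.
have [bn bv] := corner_lin_gv hb; have [bn' bv'] := corner_lin_gv hb'.
move: bn bv bn' bv'; case: b {hb} => [[y l]|] //; case: b' {hb'} => [[y' l']|] //= _ -> _ ->.
by rewrite /root /= in hne; rewrite hne.
Qed.

Lemma corner_uniq (ls : seq (LRG * LRG)) :
  (forall ab, ab \in ls -> ab.1 != None /\ ab.2 != None) ->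
  (forall i j, (i < j)%N -> (j < size ls)%N ->
  forall b b', corner_root le (linpoly (nth (lone G, lone G) ls i)) b ->
               corner_root le (linpoly (nth (lone G, lone G) ls j)) b' ->
               ~~ nu_equiv b b') ->
  uniq [seq root ab | ab <- ls].
Proof.
move=> hnz hpw; apply/(uniqPn 0) => -[i [j [hij hj]]].
rewrite size_map in hj.
have hi : (i < size ls)%N by apply: ltn_trans hj.
rewrite !nth_root //.
have := hpw i j hij hj.
have [n1 n2] := hnz _ (mem_nth (lone G, lone G) hi).
have [n1' n2'] := hnz _ (mem_nth (lone G, lone G) hj).
move: n1 n2 n1' n2'.
case: (nth _ ls i) => [[[xa la]|] [[xb lb]|]] //=;
case: (nth _ ls j) => [[[xa' la']|] [[xb' lb']|]] //= _ _ _ _ h e.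
have := h _ _ (@corner_lin_ex xa xb la lb) (@corner_lin_ex xa' xb' la' lb').
by rewrite /root /= in e; rewrite /= e eqxx.
Qed.

Lemma main (f : lpoly G) : separable le f -> separable le (lderiv f).
Proof.
move=> [c [ls [hnz hpw heq]]].
have hu := corner_uniq hnz hpw.
have [nz zr cv rt] := prod_props hnz hu.
set P := coef (prod_lin le ls) in nz zr cv rt.
set n := size ls in nz zr cv rt.
have hf : forall k, coef f k = lmul c (P k) by move=> k; rewrite heq coef_pmulC.
have hw : forall k, coef (lderiv f) k = lscale k (coef f k.+1).
  move=> k; rewrite /lderiv {1}/coef.
  case: (ltnP k (size f).-1) => h.
    by rewrite (nth_map 0%N) ?size_iota // nth_iota.
  rewrite nth_default ?size_map ?size_iota // coef_big //.
  by case: (size f) h => [|s] //= h; apply: leq_trans h _.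
have triv : (forall k, coef (lderiv f) k = None) -> separable le (lderiv f).
  move=> h0; exists None, [::]; split => // k.
  by rewrite h0 coef_pmulC.
case: c hf {heq} => [[cx cl]|] hf; last first.
  by apply: triv => k; rewrite hw hf.
case: n nz zr cv rt => [|m] nz zr cv rt.
  by apply: triv => k; rewrite hw hf zr // lmulr0.
have gvw : forall j, (j <= m)%N -> coef (lderiv f) j != None /\
    gv (coef (lderiv f) j) = cx + gv (P j.+1).
  move=> j hj; rewrite hw hf; have := nz j.+1 hj.
  by case: (P j.+1) => [[v l]|].
have hcv : forall k, (0 < k < m)%N -> lt (D (coef (lderiv f)) k) (D (coef (lderiv f)) k.+1).
  move=> k /andP [k0 hk].
  rewrite /D (gvw k (ltnW hk)).2 (gvw k.-1 (leq_trans (leq_pred k) (ltnW hk))).2 subDl.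
  rewrite (gvw k.+1 hk).2 subDl prednK //; by have := cv k.+1; rewrite /D /= ltnS; apply.
have [c' [ls' [hnz' hu' _ _ heq']]] := @construct m (coef (lderiv f))
  (fun k hk => (gvw k hk).1)
  (fun k hk => ltac:(by rewrite hw hf zr // lmulr0)) hcv.
exists c', ls'; split => //; first exact: uniq_corner.
Qed.

End Proof.

Theorem corollary9p7 (G : zmodType) (le : rel G) (f : lpoly G) :
  is_total_order_group le ->
  separable le f -> separable le (lderiv f).
Proof. by move=> HG; apply: main. Qed.
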